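(* Let $e_1,e_2$ be connected events in the LTSI of CCSK$^{\mathrm P}$. Then: (1) exactly one of $e_1\mathrel\iota e_2$ and $e_1\otimes e_2$ holds; (2) if $e_1\odot e_2$ then $e_1\mathrel\iota e_2$; (3) if $e_1,e_2$ are composable and $e_1\mathrel\iota e_2$ then $e_1\odot e_2$.
   Context: Names $\mathsf N$ with bijection $\overline\cdot$ onto disjoint co-names; $\mathsf L=\mathsf N\cup\overline{\mathsf N}\cup\{\tau\}$ ($\alpha$ over $\mathsf L$, $\lambda$ over $\mathsf L\setminus\{\tau\}$); keys $\mathsf K$ denumerable. CCSK processes $X::=\mathbf 0\mid\alpha.X\mid X\backslash\lambda\mid X+Y\mid X|Y\mid\alpha[k].X$; $\mathrm{keys}(X)$ keys in $X$. Directions $D\in\{\mathrm L,\mathrm R\}$, $\bar{\mathrm L}=\mathrm R$, $\bar{\mathrm R}=\mathrm L$. Proof keyed labels $\theta::=\upsilon\alpha[k]\mid\upsilon\langle\upsilon_1\lambda[k],\upsilon_2\overline\lambda[k]\rangle$ ($\upsilon,\upsilon_i\in\{|_{\mathrm L},|_{\mathrm R},+_{\mathrm L},+_{\mathrm R}\}^*$), $\ell(\upsilon\alpha[k])=\alpha$, $\ell(\upsilon\langle\cdots\rangle)=\tau$, $\mathrm{key}(\theta)=k$. Forward CCSK$^{\mathrm P}$ transitions: least relation closed under (act) $\alpha.X\xrightarrow{\alpha[k]}\alpha[k].X$ if $\mathrm{keys}(X)=\emptyset$; (pre) $X\xrightarrow\theta X',\mathrm{key}(\theta)\ne k\Rightarrow\alpha[k].X\xrightarrow\theta\alpha[k].X'$;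 (res) $X\xrightarrow\theta X',\ell(\theta)\notin\{\lambda,\overline\lambda\}\Rightarrow X\backslash\lambda\xrightarrow\theta X'\backslash\lambda$; (par) $X\xrightarrow\theta X',\mathrm{key}(\theta)\notin\mathrm{keys}(Y)\Rightarrow X|Y\xrightarrow{|_{\mathrm L}\theta}X'|Y$, $Y|X\xrightarrow{|_{\mathrm R}\theta}Y|X'$; (syn) $X\xrightarrow{\upsilon_1\lambda[k]}X',Y\xrightarrow{\upsilon_2\overline\lambda[k]}Y'\Rightarrow X|Y\xrightarrow{\langle\upsilon_1\lambda[k],\upsilon_2\overline\lambda[k]\rangle}X'|Y'$; (sum) $X\xrightarrow\theta X',\mathrm{keys}(Y)=\emptyset\Rightarrow X+Y\xrightarrow{+_{\mathrm L}\theta}X'+Y$, $Y+X\xrightarrow{+_{\mathrm R}\theta}Y+X'$. Backward transitions are converses of forward ones; $\bar t$ is the inverse of $t$. Only processes reachable by a path from a key-free process are considered. Transitions are connected if there is a path from the source of one to the target of the other; composable if the target of the first is the source of the second; coinitial if same source. Relations on proof labels (least closed under rules; ''prefix'' = form $\beta[k']$): Connectivity $\frown$: (A1) $\alpha[k]\frown\theta$; (A2) $\theta\frown\alpha[k]$ if $\theta$ not a prefix; (P1) $|_D\theta\frown|_D\theta'$ if $\theta\frown\theta'$; (P2) $|_D\theta\frown|_{\bar D}\theta'$; (C1),(C2) likewise with $+$; (S1) $|_D\theta\frown\langle\theta_{\mathrm L},\theta_{\mathrm R}\rangle$ if $\theta\frown\theta_D$; (S2) symmetric; (S3) $\langle\theta_1,\theta_2\rangle\frown\langle\theta_1',\theta_2'\rangle$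 if $\theta_i\frown\theta_i'$ for $i=1,2$. Dependence $\otimes$: A1, A2, C1, C2, P1, S1, S2 with $\otimes$ for $\frown$; (P2$_k$) $|_D\theta\otimes|_{\bar D}\theta'$ if equal keys; (S3) $\langle\theta_1,\theta_2\rangle\otimes\langle\theta_1',\theta_2'\rangle$ if for some $i\ne j$, $\theta_i\otimes\theta_i'$ and $\theta_j\frown\theta_j'$. Independence $\iota$: C1, P1, S1, S2, S3 with $\iota$ for $\frown$, and (P2$_k$) $|_D\theta\mathrel\iota|_{\bar D}\theta'$ if different keys. On transitions: $t_1\mathrel\iota t_2$ iff connected and labels $\iota$. Event equivalence $\sim$: smallest equivalence on transitions with $t\sim t'$ whenever $t:P\to Q$, $u:P\to R$, $u':Q\to S$, $t':R\to S$ ($u'$ with label and direction of $u$, $t'$ of $t$) and $t\mathrel\iota u$. Events are classes $[t]$. For events: $e_1,e_2$ connected (resp. composable) if some $t_1\in e_1$, $t_2\in e_2$ are connected (resp. composable); $e_1\mathrel\iota e_2$ if some $t_1\in e_1,t_2\in e_2$ satisfy $t_1\mathrel\iota t_2$; $e_1\otimes e_2$ if some $t_1\in e_1,t_2\in e_2$ have labels satisfying $\otimes$; core independence $e_1\odot e_2$ if some coinitial $t_1\in e_1,t_2\in e_2$ satisfy $t_1\mathrel\iota t_2$. *)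

(* Defs.v *)
From Stdlib Require Import List Relations.
Import ListNotations.

Set Implicit Arguments.

Section CCSKP.

Variable N : Type.
Definition key := nat.

Inductive vis : Type := VName (a : N) | VCoName (a : N).
Inductive act : Type := Vis (l : vis) | Tau.

Definition vbar (l : vis) : vis :=
  match l with VName a => VCoName a | VCoName a => VName a end.

Inductive proc : Type :=
  | Nil : proc
  | Pre : act -> proc -> proc
  | Res : proc -> vis -> proc
  | Sum : proc -> proc -> proc
  | Par : proc -> proc -> proc
  | Keyed : act -> key -> proc -> proc.

Fixpoint keys (X : proc) : list key :=
  match X with
  | Nil => []
  | Pre _ X => keys X
  | Res X _ => keys X
  | Sum X Y => keys X ++ keys Y
  | Par X Y => keys X ++ keys Y
  | Keyed _ k X => k :: keys X
  end.

Inductive dir : Type := DL | DR.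
Definition dbar (d : dir) : dir := match d with DL => DR | DR => DL end.

(* Proof keyed labels, built structurally:
     PA α k        = α[k]
     PPar D θ      = |_D θ
     PSum D θ      = +_D θ
     PSyn θ1 θ2    = ⟨θ1, θ2⟩
   so  υα[k]  is a string of PPar/PSum around PA. *)
Inductive plabel : Type :=
  | PA : act -> key -> plabel
  | PPar : dir -> plabel -> plabel
  | PSum : dir -> plabel -> plabel
  | PSyn : plabel -> plabel -> plabel.

Fixpoint lab (t : plabel) : act :=
  match t with
  | PA a _ => a
  | PPar _ t => lab t
  | PSum _ t => lab t
  | PSyn _ _ => Tau
  end.

Fixpoint pkey (t : plabel) : key :=
  match t with
  | PA _ k => k
  | PPar _ t => pkey t
  | PSum _ t => pkey t
  | PSyn t _ => pkey t
  end.

Definition is_prefix (t : plabel) : Prop := exists a k, t = PA a k.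

Inductive fstep : proc -> plabel -> proc -> Prop :=
  | f_act : forall a X k, keys X = [] ->
      fstep (Pre a X) (PA a k) (Keyed a k X)
  | f_pre : forall a k X t X', fstep X t X' -> pkey t <> k ->
      fstep (Keyed a k X) t (Keyed a k X')
  | f_res : forall X t X' l, fstep X t X' ->
      lab t <> Vis l -> lab t <> Vis (vbar l) ->
      fstep (Res X l) t (Res X' l)
  | f_parL : forall X t X' Y, fstep X t X' -> ~ In (pkey t) (keys Y) ->
      fstep (Par X Y) (PPar DL t) (Par X' Y)
  | f_parR : forall X t X' Y, fstep X t X' -> ~ In (pkey t) (keys Y) ->
      fstep (Par Y X) (PPar DR t) (Par Y X')
  | f_syn : forall X X' Y Y' t1 t2 l k,
      fstep X t1 X' -> fstep Y t2 Y' ->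
      lab t1 = Vis l -> pkey t1 = k ->
      lab t2 = Vis (vbar l) -> pkey t2 = k ->
      fstep (Par X Y) (PSyn t1 t2) (Par X' Y')
  | f_sumL : forall X t X' Y, fstep X t X' -> keys Y = [] ->
      fstep (Sum X Y) (PSum DL t) (Sum X' Y)
  | f_sumR : forall X t X' Y, fstep X t X' -> keys Y = [] ->
      fstep (Sum Y X) (PSum DR t) (Sum Y X').

(* Transitions (forward: fwd = true; backward = converse of a forward one) *)
Record trans : Type := Trans { src : proc; tlab : plabel; fwd : bool; tgt : proc }.

Definition valid (t : trans) : Prop :=
  if fwd t then fstep (src t) (tlab t) (tgt t) else fstep (tgt t) (tlab t) (src t).

Definition step (P Q : proc) : Prop :=
  exists t, fstep P t Q \/ fstep Q t P.

Definition path : proc -> proc -> Prop := clos_refl_trans proc step.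

(* only processes reachable from a key-free process are considered *)
Definition reachable (P : proc) : Prop := exists Q, keys Q = [] /\ path Q P.

Definition lts_trans (t : trans) : Prop := reachable (src t) /\ valid t.

Definition t_connected (t1 t2 : trans) : Prop := path (src t1) (tgt t2).
Definition t_composable (t1 t2 : trans) : Prop := tgt t1 = src t2.
Definition t_coinitial (t1 t2 : trans) : Prop := src t1 = src t2.

Inductive lconn : plabel -> plabel -> Prop :=
  | cA1 : forall a k t, lconn (PA a k) t
  | cA2 : forall t a k, ~ is_prefix t -> lconn t (PA a k)
  | cP1 : forall d t t', lconn t t' -> lconn (PPar d t) (PPar d t')
  | cP2 : forall d t t', lconn (PPar d t) (PPar (dbar d) t')
  | cC1 : forall d t t', lconn t t' -> lconn (PSum d t) (PSum d t')
  | cC2 : forall d t t', lconn (PSum d t) (PSum (dbar d) t')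
  | cS1L : forall t tL tR, lconn t tL -> lconn (PPar DL t) (PSyn tL tR)
  | cS1R : forall t tL tR, lconn t tR -> lconn (PPar DR t) (PSyn tL tR)
  | cS2L : forall t tL tR, lconn tL t -> lconn (PSyn tL tR) (PPar DL t)
  | cS2R : forall t tL tR, lconn tR t -> lconn (PSyn tL tR) (PPar DR t)
  | cS3 : forall t1 t2 t1' t2', lconn t1 t1' -> lconn t2 t2' ->
      lconn (PSyn t1 t2) (PSyn t1' t2').

Inductive ldep : plabel -> plabel -> Prop :=
  | dA1 : forall a k t, ldep (PA a k) t
  | dA2 : forall t a k, ~ is_prefix t -> ldep t (PA a k)
  | dC1 : forall d t t', ldep t t' -> ldep (PSum d t) (PSum d t')
  | dC2 : forall d t t', ldep (PSum d t) (PSum (dbar d) t')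
  | dP1 : forall d t t', ldep t t' -> ldep (PPar d t) (PPar d t')
  | dP2k : forall d t t', pkey t = pkey t' -> ldep (PPar d t) (PPar (dbar d) t')
  | dS1L : forall t tL tR, ldep t tL -> ldep (PPar DL t) (PSyn tL tR)
  | dS1R : forall t tL tR, ldep t tR -> ldep (PPar DR t) (PSyn tL tR)
  | dS2L : forall t tL tR, ldep tL t -> ldep (PSyn tL tR) (PPar DL t)
  | dS2R : forall t tL tR, ldep tR t -> ldep (PSyn tL tR) (PPar DR t)
  | dS3_1 : forall t1 t2 t1' t2', ldep t1 t1' -> lconn t2 t2' ->
      ldep (PSyn t1 t2) (PSyn t1' t2')
  | dS3_2 : forall t1 t2 t1' t2', ldep t2 t2' -> lconn t1 t1' ->
      ldep (PSyn t1 t2) (PSyn t1' t2').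

Inductive lind : plabel -> plabel -> Prop :=
  | iC1 : forall d t t', lind t t' -> lind (PSum d t) (PSum d t')
  | iP1 : forall d t t', lind t t' -> lind (PPar d t) (PPar d t')
  | iP2k : forall d t t', pkey t <> pkey t' -> lind (PPar d t) (PPar (dbar d) t')
  | iS1L : forall t tL tR, lind t tL -> lind (PPar DL t) (PSyn tL tR)
  | iS1R : forall t tL tR, lind t tR -> lind (PPar DR t) (PSyn tL tR)
  | iS2L : forall t tL tR, lind tL t -> lind (PSyn tL tR) (PPar DL t)
  | iS2R : forall t tL tR, lind tR t -> lind (PSyn tL tR) (PPar DR t)
  | iS3 : forall t1 t2 t1' t2', lind t1 t1' -> lind t2 t2' ->
      lind (PSyn t1 t2) (PSyn t1' t2').

Definition t_ind (t1 t2 : trans) : Prop := t_connected t1 t2 /\ lind (tlab t1) (tlab t2).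

(* the square generating event equivalence:
   t : P -> Q, u : P -> R, u' : Q -> S, t' : R -> S, with u' having the label and
   direction of u, t' those of t, and t ι u *)
Definition square (t t' : trans) : Prop :=
  exists u u',
    lts_trans t /\ lts_trans u /\ lts_trans u' /\ lts_trans t' /\
    src u = src t /\ src u' = tgt t /\ src t' = tgt u /\ tgt t' = tgt u' /\
    tlab u' = tlab u /\ fwd u' = fwd u /\ tlab t' = tlab t /\ fwd t' = fwd t /\
    t_ind t u.

Definition ev_eq : trans -> trans -> Prop := clos_refl_sym_trans trans square.

Definition event := trans -> Prop.
Definition is_event (e : event) : Prop :=
  exists t, lts_trans t /\ forall s, e s <-> ev_eq t s.

Definition e_connected (e1 e2 : event) : Prop :=
  exists t1 t2, e1 t1 /\ e2 t2 /\ t_connected t1 t2.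
Definition e_composable (e1 e2 : event) : Prop :=
  exists t1 t2, e1 t1 /\ e2 t2 /\ t_composable t1 t2.
Definition e_ind (e1 e2 : event) : Prop :=
  exists t1 t2, e1 t1 /\ e2 t2 /\ t_ind t1 t2.
Definition e_dep (e1 e2 : event) : Prop :=
  exists t1 t2, e1 t1 /\ e2 t2 /\ ldep (tlab t1) (tlab t2).
Definition e_core_ind (e1 e2 : event) : Prop :=
  exists t1 t2, e1 t1 /\ e2 t2 /\ t_coinitial t1 t2 /\ t_ind t1 t2.

End CCSKP.

(* Main.v *)
Require Import Defs.
From Stdlib Require Import List Relations Arith.
Import ListNotations.

Set Implicit Arguments.
Section Aux.
Variable N : Type.
Implicit Types P Q R X Y : proc N.

Definition st (b : bool) (P : proc N) (th : plabel N) (Q : proc N) : Prop :=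
  if b then fstep P th Q else fstep Q th P.

Lemma inv_nil b th Q : st b (Nil N) th Q -> False.
Proof. destruct b; simpl; intro H; inversion H. Qed.

Lemma inv_pre b a X th Q : st b (Pre a X) th Q -> exists k, th = PA a k.
Proof. destruct b; simpl; intro H; inversion H; subst; eauto. Qed.

Lemma inv_keyed b a k X th Q : st b (Keyed a k X) th Q ->
  (exists k', th = PA a k') \/
  (exists X', Q = Keyed a k X' /\ st b X th X' /\ pkey th <> k).
Proof. destruct b; simpl; intro H; inversion H; subst; eauto 10. Qed.

Lemma inv_res b X l th Q : st b (Res X l) th Q ->
  exists X', Q = Res X' l /\ st b X th X' /\ lab th <> Vis l /\ lab th <> Vis (vbar l).
Proof. destruct b; simpl; intro H; inversion H; subst; eauto 10. Qed.

Lemma inv_sum b X Y th Q : st b (Sum X Y) th Q ->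
  (exists th' X', th = PSum DL th' /\ Q = Sum X' Y /\ st b X th' X' /\ keys Y = []) \/
  (exists th' Y', th = PSum DR th' /\ Q = Sum X Y' /\ st b Y th' Y' /\ keys X = []).
Proof. destruct b; simpl; intro H; inversion H; subst; [left|right|left|right]; eauto 10. Qed.

Lemma inv_par b X Y th Q : st b (Par X Y) th Q ->
  (exists th' X', th = PPar DL th' /\ Q = Par X' Y /\ st b X th' X' /\ ~ In (pkey th') (keys Y)) \/
  (exists th' Y', th = PPar DR th' /\ Q = Par X Y' /\ st b Y th' Y' /\ ~ In (pkey th') (keys X)) \/
  (exists t1 t2 X' Y' l, th = PSyn t1 t2 /\ Q = Par X' Y' /\ st b X t1 X' /\ st b Y t2 Y' /\
     lab t1 = Vis l /\ lab t2 = Vis (vbar l) /\ pkey t2 = pkey t1).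
Proof.
  destruct b; simpl; intro H; inversion H; subst;
  [left|right;left|right;right|left|right;left|right;right]; eauto 20.
Qed.

Lemma st_keyed b a k X th X' : st b X th X' -> pkey th <> k -> st b (Keyed a k X) th (Keyed a k X').
Proof. destruct b; simpl; intros; constructor; auto. Qed.
Lemma st_res b X th X' l : st b X th X' -> lab th <> Vis l -> lab th <> Vis (vbar l) -> st b (Res X l) th (Res X' l).
Proof. destruct b; simpl; intros; constructor; auto. Qed.
Lemma st_sumL b X th X' Y : st b X th X' -> keys Y = [] -> st b (Sum X Y) (PSum DL th) (Sum X' Y).
Proof. destruct b; simpl; intros; constructor; auto. Qed.
Lemma st_sumR b X th X' Y : st b X th X' -> keys Y = [] -> st b (Sum Y X) (PSum DR th) (Sum Y X').
Proof. destruct b; simpl; intros; constructor; auto. Qed.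
Lemma st_parL b X th X' Y : st b X th X' -> ~ In (pkey th) (keys Y) -> st b (Par X Y) (PPar DL th) (Par X' Y).
Proof. destruct b; simpl; intros; constructor; auto. Qed.
Lemma st_parR b X th X' Y : st b X th X' -> ~ In (pkey th) (keys Y) -> st b (Par Y X) (PPar DR th) (Par Y X').
Proof. destruct b; simpl; intros; constructor; auto. Qed.
Lemma st_syn b X X' Y Y' t1 t2 l : st b X t1 X' -> st b Y t2 Y' ->
  lab t1 = Vis l -> lab t2 = Vis (vbar l) -> pkey t2 = pkey t1 ->
  st b (Par X Y) (PSyn t1 t2) (Par X' Y').
Proof. destruct b; simpl; intros; eapply f_syn; eauto. Qed.

Lemma keys_fstep X th X' : fstep X th X' -> forall k, In k (keys X') <-> k = pkey th \/ In k (keys X).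
Proof.
  induction 1; intro k0; simpl in *; rewrite ?in_app_iff;
  repeat match goal with H : forall k, _ <-> _ |- _ => rewrite H end;
  repeat match goal with H : keys _ = [] |- _ => rewrite H end; simpl;
  subst; intuition; left; congruence.
Qed.

Lemma st_keys_l b X th X' k : st b X th X' -> In k (keys X) -> k = pkey th \/ In k (keys X').
Proof. destruct b; simpl; intros H; pose proof (keys_fstep H k); tauto. Qed.
Lemma st_keys_r b X th X' k : st b X th X' -> In k (keys X') -> k = pkey th \/ In k (keys X).
Proof. destruct b; simpl; intros H; pose proof (keys_fstep H k); tauto. Qed.


Lemma lind_sym (a b : plabel N) : lind a b -> lind b a.
Proof.
  induction 1; try (constructor; auto; fail).
  destruct d; simpl.
  - exact (iP2k DR t' t (fun H' => H (eq_sym H'))).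
  - exact (iP2k DL t' t (fun H' => H (eq_sym H'))).
Qed.

Lemma lind_ldep (a b : plabel N) : lind a b -> ldep a b -> False.
Proof.
  induction 1; intro Hd; inversion Hd; subst;
  try (match goal with H : is_prefix _ -> False |- _ => idtac end);
  try (destruct d; discriminate); eauto.
Qed.

Lemma lconn_total (a b : plabel N) : lconn a b -> lind a b \/ ldep a b.
Proof.
  induction 1;
  repeat match goal with H : _ \/ _ |- _ => destruct H end;
  try (left; constructor; auto; fail); try (right; constructor; auto; fail).
  all: try (destruct (Nat.eq_dec (pkey t) (pkey t')); [right; apply dP2k | left; apply iP2k]; auto; fail).
  all: right; (apply dS3_1 + apply dS3_2); auto.
Qed.

Lemma lconn_PA_r (t : plabel N) a k : lconn t (PA a k).
Proof.
  destruct t; [apply cA1| | |]; apply cA2; intros [? [? H]]; discriminate.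
Qed.

Fixpoint sk (P : proc N) : proc N :=
  match P with
  | Nil _ => Nil N
  | Pre a X => Pre a (sk X)
  | Res X l => Res (sk X) l
  | Sum X Y => Sum (sk X) (sk Y)
  | Par X Y => Par (sk X) (sk Y)
  | Keyed a _ X => Pre a (sk X)
  end.

Lemma sk_fstep P th Q : fstep P th Q -> sk P = sk Q.
Proof. induction 1; simpl; congruence. Qed.

Lemma sk_path P Q : path P Q -> sk P = sk Q.
Proof.
  induction 1 as [x y [t [H|H]]| |]; try congruence.
  - apply sk_fstep in H; auto.
  - apply sk_fstep in H; auto.
Qed.

Lemma lconn_sk P : forall Q b1 b2 th1 th2 R1 R2,
  st b1 P th1 R1 -> st b2 Q th2 R2 -> sk P = sk Q -> lconn th1 th2.
Proof.
  induction P; intros Q b1 b2 th1 th2 R1 R2 H1 H2 E; simpl in E.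
  - exfalso; eapply inv_nil; eauto.
  - apply inv_pre in H1 as [? ->]; apply cA1.
  - destruct Q; simpl in E; try discriminate; injection E; intros; subst.
    apply inv_res in H1 as [? [? [? ?]]]. apply inv_res in H2 as [? [? [? ?]]]. eauto.
  - destruct Q; simpl in E; try discriminate; injection E; intros; subst.
    apply inv_sum in H1 as [[? [? [-> [? [? ?]]]]]|[? [? [-> [? [? ?]]]]]];
    apply inv_sum in H2 as [[? [? [-> [? [? ?]]]]]|[? [? [-> [? [? ?]]]]]].
    + apply cC1; eauto.
    + apply (cC2 DL).
    + apply (cC2 DR).
    + apply cC1; eauto.
  - destruct Q; simpl in E; try discriminate; injection E; intros; subst.
    apply inv_par in H1 as [[? [? [-> [? [? ?]]]]]|[[? [? [-> [? [? ?]]]]]|[? [? [? [? [? [-> [? [? [? [? [? ?]]]]]]]]]]]]];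
    apply inv_par in H2 as [[? [? [-> [? [? ?]]]]]|[[? [? [-> [? [? ?]]]]]|[? [? [? [? [? [-> [? [? [? [? [? ?]]]]]]]]]]]]].
    + apply cP1; eauto.
    + apply (cP2 DL).
    + apply cS1L; eauto.
    + apply (cP2 DR).
    + apply cP1; eauto.
    + apply cS1R; eauto.
    + apply cS2L; eauto.
    + apply cS2R; eauto.
    + apply cS3; eauto.
  - apply inv_keyed in H1 as [[? ->]|[X' [-> [HX _]]]]; [apply cA1|].
    destruct Q; simpl in E; try discriminate; injection E; intros; subst.
    + apply inv_pre in H2 as [? ->]; apply lconn_PA_r.
    + apply inv_keyed in H2 as [[? ->]|[? [-> [? _]]]]; [apply lconn_PA_r|eauto].
Qed.

Lemma lind_PA_l a k (t : plabel N) : lind (PA a k) t -> False.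
Proof. intro H; inversion H. Qed.
Lemma lind_PA_r a k (t : plabel N) : lind t (PA a k) -> False.
Proof. intro H; inversion H. Qed.

Lemma diamond P : forall b1 b2 th1 th2 Q R,
  st b1 P th1 Q -> st b2 Q th2 R -> lind th1 th2 ->
  pkey th1 <> pkey th2 /\ exists S, st b2 P th2 S /\ st b1 S th1 R.
Proof.
  induction P; intros b1 b2 th1 th2 Q R H1 H2 Hl.
  - exfalso; eapply inv_nil; eauto.
  - apply inv_pre in H1 as [? ->]. exfalso; eapply lind_PA_l; eauto.
  - apply inv_res in H1 as [X1 [-> [HX1 [? ?]]]].
    apply inv_res in H2 as [X2 [-> [HX2 [? ?]]]].
    edestruct (IHP _ _ _ _ _ _ HX1 HX2) as [Hk [S0 [? ?]]]; [eassumption|].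
    split; auto. exists (Res S0 v); split; apply st_res; auto.
  - apply inv_sum in H1 as [[a1 [X1 [-> [-> [HX1 HY]]]]]|[a1 [Y1 [-> [-> [HY1 HX]]]]]].
    + apply inv_sum in H2 as [[a2 [X2 [-> [-> [HX2 _]]]]]|[a2 [Y2 [-> [-> [_ _]]]]]];
      inversion Hl; subst.
      edestruct (IHP1 _ _ _ _ _ _ HX1 HX2) as [Hk [S0 [? ?]]]; [eassumption|].
      split; auto. exists (Sum S0 P2); split; apply st_sumL; auto.
    + apply inv_sum in H2 as [[a2 [X2 [-> [-> [_ _]]]]]|[a2 [Y2 [-> [-> [HY2 _]]]]]];
      inversion Hl; subst.
      edestruct (IHP2 _ _ _ _ _ _ HY1 HY2) as [Hk [S0 [? ?]]]; [eassumption|].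
      split; auto. exists (Sum P1 S0); split; apply st_sumR; auto.
  - apply inv_par in H1 as [[a1 [X1 [-> [-> [HX1 HY]]]]]|[[a1 [Y1 [-> [-> [HY1 HX]]]]]|[tL [tR [X1 [Y1 [l [-> [-> [HX1 [HY1 [HlL [HlR HkR]]]]]]]]]]]]].
    + apply inv_par in H2 as [[a2 [X2 [-> [-> [HX2 HY2]]]]]|[[a2 [Y2 [-> [-> [HY2 HX2]]]]]|[uL [uR [X2 [Y2 [l' [-> [-> [HX2 [HY2 [HlL' [HlR' HkR']]]]]]]]]]]]];
      inversion Hl; subst.
      * edestruct (IHP1 _ _ _ _ _ _ HX1 HX2) as [Hk [S0 [? ?]]]; [eassumption|].
        split; auto. exists (Par S0 P2); split; apply st_parL; auto.
      * split; auto. exists (Par P1 Y2); split.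
        -- apply st_parR; auto. intro Hin. destruct (@st_keys_l _ _ _ _ _ HX1 Hin); auto.
        -- apply st_parL; auto. intro Hin. destruct (@st_keys_r _ _ _ _ _ HY2 Hin); auto.
      *         edestruct (IHP1 _ _ _ _ _ _ HX1 HX2) as [Hk [S0 [? ?]]]; [eassumption|].
        split; auto. exists (Par S0 Y2); split.
        -- eapply st_syn; eauto.
        -- apply st_parL; auto. intro Hin. destruct (@st_keys_r _ _ _ _ _ HY2 Hin); auto. congruence.
    + apply inv_par in H2 as [[a2 [X2 [-> [-> [HX2 HY2]]]]]|[[a2 [Y2 [-> [-> [HY2 HX2]]]]]|[uL [uR [X2 [Y2 [l' [-> [-> [HX2 [HY2 [HlL' [HlR' HkR']]]]]]]]]]]]];
      inversion Hl; subst.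
      * split; auto. exists (Par X2 P2); split.
        -- apply st_parL; auto. intro Hin. destruct (@st_keys_l _ _ _ _ _ HY1 Hin); auto.
        -- apply st_parR; auto. intro Hin. destruct (@st_keys_r _ _ _ _ _ HX2 Hin); auto.
      * edestruct (IHP2 _ _ _ _ _ _ HY1 HY2) as [Hk [S0 [? ?]]]; [eassumption|].
        split; auto. exists (Par P1 S0); split; apply st_parR; auto.
      * edestruct (IHP2 _ _ _ _ _ _ HY1 HY2) as [Hk [S0 [? ?]]]; [eassumption|].
        split; [simpl; congruence|]. exists (Par X2 S0); split.
        -- eapply st_syn; eauto.
        -- apply st_parR; auto. intro Hin. destruct (@st_keys_r _ _ _ _ _ HX2 Hin); auto. congruence.
    + apply inv_par in H2 as [[a2 [X2 [-> [-> [HX2 HY2]]]]]|[[a2 [Y2 [-> [-> [HY2 HX2]]]]]|[uL [uR [X2 [Y2 [l' [-> [-> [HX2 [HY2 [HlL' [HlR' HkR']]]]]]]]]]]]];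
      inversion Hl; subst.
      * edestruct (IHP1 _ _ _ _ _ _ HX1 HX2) as [Hk [S0 [? ?]]]; [eassumption|].
        split; auto. exists (Par S0 P2); split.
        -- apply st_parL; auto. intro Hin. destruct (@st_keys_l _ _ _ _ _ HY1 Hin); auto. congruence.
        -- eapply st_syn; eauto.
      * edestruct (IHP2 _ _ _ _ _ _ HY1 HY2) as [Hk [S0 [? ?]]]; [eassumption|].
        split; [simpl; congruence|]. exists (Par P1 S0); split.
        -- apply st_parR; auto. intro Hin. destruct (@st_keys_l _ _ _ _ _ HX1 Hin); auto. congruence.
        -- eapply st_syn; eauto.
      * edestruct (IHP1 _ _ _ _ _ _ HX1 HX2) as [Hk [S0 [? ?]]]; [eassumption|].
        edestruct (IHP2 _ _ _ _ _ _ HY1 HY2) as [Hk' [S1 [? ?]]]; [eassumption|].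
        split; auto. exists (Par S0 S1); split; eapply st_syn; eauto.
  - apply inv_keyed in H1 as [[? ->]|[X1 [-> [HX1 Hk1]]]]; [exfalso; eapply lind_PA_l; eauto|].
    apply inv_keyed in H2 as [[? ->]|[X2 [-> [HX2 Hk2]]]]; [exfalso; eapply lind_PA_r; eauto|].
    edestruct (IHP _ _ _ _ _ _ HX1 HX2) as [Hk [S0 [? ?]]]; [eassumption|].
    split; auto. exists (Keyed a k S0); split; apply st_keyed; auto.
Qed.

End Aux.

Lemma ev_inv (N : Type) (t s : trans N) : ev_eq t s ->
  tlab t = tlab s /\ (lts_trans t <-> lts_trans s).
Proof.
  induction 1 as [x y Hs| x | x y _ [? ?] | x y z _ [? ?] _ [? ?]].
  - destruct Hs as [u [u' [? [? [? [? [? [? [? [? [? [? [? [? ?]]]]]]]]]]]]]].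
    split; [congruence| tauto].
  - tauto.
  - split; [congruence| tauto].
  - split; [congruence| tauto].
Qed.

Lemma ev_mem (N : Type) (e : event N) : is_event e ->
  exists th, forall s, e s -> lts_trans s /\ tlab s = th.
Proof.
  intros [t0 [Ht He]]. exists (tlab t0). intros s Hs.
  apply He in Hs. apply ev_inv in Hs as [? ?]. split; [tauto|congruence].
Qed.

Lemma reach_step (N : Type) (P Q : proc N) : reachable P -> step P Q -> reachable Q.
Proof.
  intros [R [Hk Hp]] Hs. exists R; split; auto. eapply rt_trans; eauto. apply rt_step; auto.
Qed.

Lemma st_step (N : Type) b (P Q : proc N) th : st b P th Q -> step P Q.
Proof. destruct b; simpl; intro H; exists th; auto. Qed.

Theorem lemma6p4 (N : Type) (e1 e2 : event N) :
  is_event e1 -> is_event e2 -> e_connected e1 e2 ->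
  ((e_ind e1 e2 \/ e_dep e1 e2) /\ ~ (e_ind e1 e2 /\ e_dep e1 e2)) /\
  (e_core_ind e1 e2 -> e_ind e1 e2) /\
  (e_composable e1 e2 -> e_ind e1 e2 -> e_core_ind e1 e2).
Proof.
  intros He1 He2 [t1 [t2 [E1 [E2 C]]]].
  destruct (ev_mem He1) as [th1 M1]. destruct (ev_mem He2) as [th2 M2].
  split; [|split].
  - destruct (M1 _ E1) as [[_ V1] L1]. destruct (M2 _ E2) as [[_ V2] L2].
    assert (Hc : lconn th1 th2).
    { apply sk_path in C. unfold valid in V1, V2.
      rewrite <- L1, <- L2.
      apply (@lconn_sk N (src t1) (tgt t2) (fwd t1) (negb (fwd t2)) _ _ (tgt t1) (src t2)); auto.
      all: revert V1 V2; unfold st; destruct (fwd t1), (fwd t2); simpl; auto. }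
    split.
    + destruct (lconn_total Hc) as [H|H].
      * left. exists t1, t2. repeat split; auto. unfold t_ind. rewrite L1, L2. auto.
      * right. exists t1, t2. repeat split; auto. rewrite L1, L2. auto.
    + intros [[a [b [Ea [Eb [_ Hl]]]]] [c [d [Ec [Ed Hd]]]]].
      destruct (M1 _ Ea) as [_ La]. destruct (M2 _ Eb) as [_ Lb].
      destruct (M1 _ Ec) as [_ Lc]. destruct (M2 _ Ed) as [_ Ld].
      rewrite La, Lb in Hl. rewrite Lc, Ld in Hd. eapply lind_ldep; eauto.
  - intros [a [b [Ea [Eb [_ H]]]]]. exists a, b. auto.
  - intros [a [b [Ea [Eb Hcomp]]]] [c [d [Ec [Ed [_ Hl]]]]].
    destruct (M1 _ Ea) as [Ta La]. destruct (M2 _ Eb) as [Tb Lb].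
    destruct (M1 _ Ec) as [_ Lc]. destruct (M2 _ Ed) as [_ Ld].
    rewrite Lc, Ld in Hl.
    assert (Va : st (fwd a) (src a) (tlab a) (tgt a)) by (destruct Ta; auto).
    assert (Vb : st (fwd b) (src b) (tlab b) (tgt b)) by (destruct Tb; auto).
    unfold t_composable in Hcomp. rewrite <- Hcomp in Vb.
    rewrite La in Va. rewrite Lb in Vb.
    destruct (@diamond N _ _ _ _ _ _ _ Va Vb Hl) as [_ [S [HS1 HS2]]].
    set (b2 := Trans (src a) th2 (fwd b) S).
    set (a2 := Trans S th1 (fwd a) (tgt b)).
    assert (RP : reachable (src a)) by (destruct Ta; auto).
    assert (RS : reachable S) by (eapply reach_step; eauto; eapply st_step; eauto).
    assert (Sq : square b2 b).
    { exists a, a2. simpl. repeat split; auto.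
      - apply Ta.
      - apply Tb.
      - apply Tb.
      - apply rt_step. eapply st_step; eauto.
      - simpl. rewrite La. apply lind_sym; auto. }
    assert (E2' : e2 b2).
    { destruct He2 as [t0 [_ Hq]]. apply Hq. apply Hq in Eb.
      eapply rst_trans; [exact Eb|]. apply rst_sym, rst_step; auto. }
    exists a, b2. repeat split; auto.
    + apply rt_step. eapply st_step; eauto.
    + simpl. rewrite La; auto.
Qed.
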